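(* In the setting of the context, for each integer $r\ge r_0$ there are elements $g_0\in F_{xz}$ and $g_1\in F_{yz}$ such that: (1) $s_2^{-1}g_0s_2=g_1$; (2) $r/D\le|g_0|_{R_{xz}}\le r$ and $r/D\le|g_1|_{R_{yz}}\le r$; (3) there is a path $\gamma$ in the Cayley graph $\Gamma(G_1,S_1)$ connecting $g_0$ and $g_1$ of length at most $Df(r)$, each vertex of which is of the form $g_0h$ with $h\in H$; in particular $\gamma$ avoids the open ball of radius $r/D$ about $e$.
   Context: $H$ is a finitely presented group with finite generating set $T$, containing a free subgroup $F$ of rank $p$ with free basis $R=\{d_1,\dots,d_p\}\subset T$. $F_x,F_y,F_z$ are free of rank $p$ with bases $R_x=\{x_i\},R_y=\{y_i\},R_z=\{z_i\}$. $G_1=[H\ast_{\langle d_i=x_iy_i^{-1}\rangle}(F_x\times F_y\times F_z)]\times\langle s_1\rangle$; $a_i=x_iz_i$, $b_i=y_iz_i$, $R_{xz}=\{a_i\}$, $R_{yz}=\{b_i\}$, $F_{xz}=\langle R_{xz}\rangle$, $F_{yz}=\langle R_{yz}\rangle$; $G_2=\langle G_1,s_2\mid s_2^{-1}a_is_2=b_i,\ 1\le i\le p\rangle$; $S_1=T\cup R_x\cup R_y\cup R_z\cup R_{xz}\cup R_{yz}\cup\{s_1\}$. $f=\Delta^{-1}$ where $\Delta$ is a non-decreasing bijection of $[0,\infty)$ Lipschitz equivalent to $\mathrm{Dist}_F^H$ (with $\mathrm{Dist}_F^H(n)=\max\{|g|_R:g\in F,|g|_T\le n\}$), $\Delta(r)\ge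 r$ for $r\ge1$, $f(|g|_R)\le|g|_T$ for $g\in F$; and $D>1$, $r_0\ge1$ are constants such that for each $r\ge r_0$ there is an element $u\in F$ which is palindromic with respect to $R$ (its reduced word in $R$ reads the same in both directions) with $r/D\le|u|_R\le r$ and $|u|_T\le Df(r)$. (Such $\Delta,D,r_0$ exist when $\mathrm{Dist}_F^H$ admits an exponentially bounded sequence of palindromic certificates in $F$, the standing assumption.) *)

(* Defs.v *)
From Stdlib Require Import Reals.
From mathcomp Require Import all_boot.

Set Implicit Arguments.
Unset Strict Implicit.
Unset Printing Implicit Defensive.

(* A word over an alphabet A: letters (a, false) = a, (a, true) = a^{-1}. *)
Definition word (A : Type) := seq (A * bool).

Definition inv_word (A : Type) (w : word A) : word A :=
  rev (map (fun x => (x.1, ~~ x.2)) w).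

(* Equality of words in the group < A | rels >: the smallest equivalence
   relation, compatible with concatenation, identifying a a^{-1} (and
   a^{-1} a) with the empty word and every relator with the empty word. *)
Inductive weq (A : Type) (rels : word A -> Prop) : word A -> word A -> Prop :=
| geq_refl w : weq rels w w
| geq_sym u v : weq rels u v -> weq rels v u
| geq_trans u v w : weq rels u v -> weq rels v w -> weq rels u w
| geq_cancel u v a b : weq rels (u ++ (a, b) :: (a, ~~ b) :: v) (u ++ v)
| geq_rel u v r : rels r -> weq rels (u ++ r ++ v) (u ++ v).

Definition no_rels (A : Type) : word A -> Prop := fun _ => False.

Definition ev (I A : Type) (e : I -> word A) (w : word I) : word A :=
  flatten (map (fun x => if x.2 then inv_word (e x.1) else e x.1) w).

(* n is the word length |g|_S of g with respect to the generating family e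
   (in the group < A | rels >). *)
Definition is_wlen (I A : Type) (rels : word A -> Prop) (e : I -> word A)
  (g : word A) (n : nat) : Prop :=
  (exists w : word I, size w = n /\ weq rels (ev e w) g) /\
  (forall w : word I, weq rels (ev e w) g -> (n <= size w)%N).

Definition reduced (A : Type) (w : word A) : Prop :=
  forall (u v : word A) (a : A) (b : bool), w <> u ++ (a, b) :: (a, ~~ b) :: v.

Definition comm (A : Type) (a b : A) : word A :=
  [:: (a, false); (b, false); (a, true); (b, true)].

Definition relsH (T : finType) (relH : seq (word T)) : word T -> Prop :=
  fun w => w \in relH.

Definition eT (T : Type) : T -> word T := fun t => [:: (t, false)].

Definition eR (T : Type) (p : nat) (d : 'I_p -> T) : 'I_p -> word T :=
  fun i => [:: (d i, false)].

Definition dist_is (T : finType) (relH : seq (word T)) (p : nat) (d : 'I_p -> T)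
  (n m : nat) : Prop :=
  (exists (w : word 'I_p) (k : nat),
      is_wlen (relsH relH) (@eT T) (ev (eR d) w) k /\ (k <= n)%N /\
      is_wlen (relsH relH) (eR d) (ev (eR d) w) m) /\
  (forall (w : word 'I_p) (k j : nat),
      is_wlen (relsH relH) (@eT T) (ev (eR d) w) k -> (k <= n)%N ->
      is_wlen (relsH relH) (eR d) (ev (eR d) w) j -> (j <= m)%N).

(** * G_1 = [H *_{d_i = x_i y_i^{-1}} (F_x x F_y x F_z)] x <s_1> *)

Inductive gen1 (T : Type) (p : nat) : Type :=
| gT of T
| gx of 'I_p
| gy of 'I_p
| gz of 'I_p
| gs1.
Arguments gs1 {T p}.

Definition liftH (T : Type) (p : nat) (w : word T) : word (gen1 T p) :=
  map (fun x => (gT p x.1, x.2)) w.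

Definition rels1 (T : finType) (relH : seq (word T)) (p : nat) (d : 'I_p -> T)
  : word (gen1 T p) -> Prop :=
  fun w =>
    (exists2 r, r \in relH & w = liftH p r) \/
    (exists i j, w = comm (gx T i) (gy T j)) \/
    (exists i j, w = comm (gx T i) (gz T j)) \/
    (exists i j, w = comm (gy T i) (gz T j)) \/
    (* d_i = x_i y_i^{-1} *)
    (exists i, w = [:: (gT p (d i), false); (gy T i, false); (gx T i, true)]) \/
    (exists c, w = comm gs1 c).

Definition eA (T : Type) (p : nat) : 'I_p -> word (gen1 T p) :=
  fun i => [:: (gx T i, false); (gz T i, false)].
Definition eB (T : Type) (p : nat) : 'I_p -> word (gen1 T p) :=
  fun i => [:: (gy T i, false); (gz T i, false)].

Inductive S1gen (T : Type) (p : nat) : Type :=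
| sT of T | sX of 'I_p | sY of 'I_p | sZ of 'I_p
| sA of 'I_p | sB of 'I_p | sS1.

Definition eS1 (T : Type) (p : nat) (s : S1gen T p) : word (gen1 T p) :=
  match s with
  | sT t => [:: (gT p t, false)]
  | sX i => [:: (gx T i, false)]
  | sY i => [:: (gy T i, false)]
  | sZ i => [:: (gz T i, false)]
  | sA i => eA T i
  | sB i => eB T i
  | sS1 => [:: (gs1, false)]
  end.

(** * G_2 = < G_1, s_2 | s_2^{-1} a_i s_2 = b_i > *)

Inductive gen2 (T : Type) (p : nat) : Type :=
| g2 of gen1 T p
| gs2.
Arguments gs2 {T p}.

Definition lift1 (T : Type) (p : nat) (w : word (gen1 T p)) : word (gen2 T p) :=
  map (fun x => (g2 x.1, x.2)) w.

Definition rels2 (T : finType) (relH : seq (word T)) (p : nat) (d : 'I_p -> T)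
  : word (gen2 T p) -> Prop :=
  fun w =>
    (exists2 r, rels1 relH d r & w = lift1 r) \/
    (exists i, w = (gs2, true) :: lift1 (eA T i) ++ (gs2, false) :: inv_word (lift1 (eB T i))).

(* Main.v *)
Require Import Defs.
From Stdlib Require Import Reals.
From mathcomp Require Import all_boot.
Set Warnings "-notation-overridden".
Set Implicit Arguments.
Unset Strict Implicit.
Arguments ev : simpl never.
Arguments inv_word : simpl never.

Lemma inv_nil A : inv_word ([::] : word A) = [::].
Proof. by []. Qed.

Lemma inv_cons A (x : A * bool) u : inv_word (x :: u) = inv_word u ++ [:: (x.1, ~~ x.2)].
Proof. by rewrite /inv_word /= rev_cons cats1. Qed.

Lemma inv_cat A (u v : word A) : inv_word (u ++ v) = inv_word v ++ inv_word u.
Proof. by rewrite /inv_word map_cat rev_cat. Qed.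

Lemma inv_invK A (u : word A) : inv_word (inv_word u) = u.
Proof.
rewrite /inv_word map_rev revK -map_comp.
elim: u => [|[a b] u IH] //=. by rewrite negbK IH.
Qed.

Lemma ev_nil I A (e : I -> word A) : ev e [::] = [::].
Proof. by []. Qed.

Lemma ev_cons I A (e : I -> word A) x u :
  ev e (x :: u) = (if x.2 then inv_word (e x.1) else e x.1) ++ ev e u.
Proof. by []. Qed.

Lemma ev_cat I A (e : I -> word A) u v : ev e (u ++ v) = ev e u ++ ev e v.
Proof. by rewrite /ev map_cat flatten_cat. Qed.

Lemma ev_inv I A (e : I -> word A) u : ev e (inv_word u) = inv_word (ev e u).
Proof.
elim: u => [|x u IH] //. rewrite inv_cons ev_cat IH !ev_cons inv_cat ev_nil cats0.
congr (_ ++ _). by case: x.2; rewrite /= ?inv_invK.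
Qed.

Lemma ev_comp I J A (e : I -> word J) (phi : J -> word A) w :
  ev phi (ev e w) = ev (fun i => ev phi (e i)) w.
Proof.
elim: w => [|x w IH] //. rewrite !ev_cons ev_cat IH. by case: x.2; rewrite ?ev_inv.
Qed.

Lemma ev_ext I A (e e' : I -> word A) w : (forall i, e i = e' i) -> ev e w = ev e' w.
Proof. move=> H; elim: w => [|x w IH] //. by rewrite !ev_cons IH H. Qed.

Definition M I A (c : I -> A) (sg : bool -> bool) (w : word I) : word A :=
  map (fun x => (c x.1, sg x.2)) w.

Lemma ev_single I A (c : I -> A) w : ev (fun i => [:: (c i, false)]) w = M c id w.
Proof. elim: w => [|[i b] w IH] //. rewrite ev_cons IH. by case: b. Qed.

Lemma ev_M I J A (c : I -> J) (e : J -> word A) w : ev e (M c id w) = ev (fun i => e (c i)) w.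
Proof. by rewrite /ev /M -map_comp. Qed.

Lemma ev_nilf I A w : ev (fun _ : I => [::] : word A) w = [::].
Proof. elim: w => [|[i b] w IH] //. rewrite ev_cons IH. by case: b. Qed.

Lemma inv_M I A (c : I -> A) sg w : inv_word (M c sg w) = M c (fun b => ~~ sg b) (rev w).
Proof. by rewrite /inv_word /M map_rev -map_comp. Qed.

Section W.
Variables (A : Type) (rels : word A -> Prop).
Notation weq := (weq rels).

Lemma weq_ctx x y u v : weq u v -> weq (x ++ u ++ y) (x ++ v ++ y).
Proof.
elim=> {u v} [w|u v _ IH|u v w _ IH1 _ IH2|u v a b|u v r Hr].
- exact: geq_refl.
- exact: geq_sym.
- exact: geq_trans IH1 IH2.
- have := geq_cancel rels (x ++ u) (v ++ y) a b. by rewrite -!catA /=.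
- have := geq_rel (x ++ u) (v ++ y) Hr. by rewrite -!catA.
Qed.

Lemma weq_cat u u' v v' : weq u u' -> weq v v' -> weq (u ++ v) (u' ++ v').
Proof.
move=> H1 H2. apply: (geq_trans (v := u' ++ v)).
- exact: (weq_ctx [::] v H1).
- have := weq_ctx u' [::] H2. by rewrite !cats0.
Qed.

Lemma weq_rinv u : weq (u ++ inv_word u) [::].
Proof.
elim: u => [|x u IH]; first exact: geq_refl.
rewrite inv_cons.
apply: (geq_trans (v := [:: x] ++ [::] ++ [:: (x.1, ~~ x.2)])).
- have := weq_ctx [:: x] [:: (x.1, ~~ x.2)] IH. by rewrite /= -catA.
- case: x => a b /=. exact: (geq_cancel rels [::] [::] a b).
Qed.

Lemma weq_linv u : weq (inv_word u ++ u) [::].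
Proof. have := weq_rinv (inv_word u). by rewrite inv_invK. Qed.

Lemma weq_inv u v : weq u v -> weq (inv_word u) (inv_word v).
Proof.
move=> H.
apply: (geq_trans (v := inv_word u ++ v ++ inv_word v)).
- apply: geq_sym. have := weq_cat (geq_refl rels (inv_word u)) (weq_rinv v).
  by rewrite cats0.
- apply: (geq_trans (v := inv_word u ++ u ++ inv_word v)).
  + apply: weq_cat; first exact: geq_refl.
    apply: weq_cat; [exact: geq_sym | exact: geq_refl].
  + rewrite catA. exact: (weq_cat (weq_linv u) (geq_refl rels (inv_word v))).
Qed.

Lemma weq_ev_pt I (e e' : I -> word A) w :
  (forall i, weq (e i) (e' i)) -> weq (ev e w) (ev e' w).
Proof.
move=> H; elim: w => [|x w IH]; first exact: geq_refl.
rewrite !ev_cons. apply: weq_cat => //. case: x.2 => //. exact: weq_inv.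
Qed.

Lemma flipL (a b : A) s t : weq [:: (a, s); (b, t)] [:: (b, t); (a, s)] ->
  weq [:: (a, ~~ s); (b, t)] [:: (b, t); (a, ~~ s)].
Proof.
move=> H.
apply: (geq_trans (v := [:: (a, ~~ s)] ++ [:: (b, t); (a, s)] ++ [:: (a, ~~ s)])).
- have := geq_cancel rels [:: (a, ~~ s); (b, t)] [::] a s.
  rewrite cats0 => H2. apply: geq_sym. exact: H2.
apply: (geq_trans (v := [:: (a, ~~ s)] ++ [:: (a, s); (b, t)] ++ [:: (a, ~~ s)])).
- apply: weq_ctx. exact: geq_sym.
have := geq_cancel rels [::] [:: (b, t); (a, ~~ s)] a (~~ s). by rewrite negbK.
Qed.

Lemma flipR (a b : A) s t : weq [:: (a, s); (b, t)] [:: (b, t); (a, s)] ->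
  weq [:: (a, s); (b, ~~ t)] [:: (b, ~~ t); (a, s)].
Proof. move=> H. apply: geq_sym. apply: flipL. exact: geq_sym. Qed.

Lemma comm_letters (a b : A) : rels (comm a b) ->
  forall s t, weq [:: (a, s); (b, t)] [:: (b, t); (a, s)].
Proof.
move=> Hr.
have base : weq [:: (a, false); (b, false)] [:: (b, false); (a, false)].
  apply: geq_sym.
  apply: (geq_trans (v := comm a b ++ [:: (b, false); (a, false)])).
  - apply: geq_sym. exact: (geq_rel [::] [:: (b, false); (a, false)] Hr).
  apply: (geq_trans (v := [:: (a, false); (b, false); (a, true); (a, false)])).
  - exact: (geq_cancel rels [:: (a, false); (b, false); (a, true)] [:: (a, false)] b true).
  have := geq_cancel rels [:: (a, false); (b, false)] [::] a true. by rewrite cats0.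
case; case.
- exact: (flipR (flipL base)).
- exact: (flipL base).
- exact: (flipR base).
- exact: base.
Qed.

Lemma clw I (a : A * bool) (c : I -> A) sg :
  (forall j t, weq [:: a; (c j, t)] [:: (c j, t); a]) ->
  forall w, weq (a :: M c sg w) (M c sg w ++ [:: a]).
Proof.
move=> H; elim=> [|x w IH]; first exact: geq_refl.
rewrite /M /= -/(M c sg w).
apply: (geq_trans (v := [:: (c x.1, sg x.2); a] ++ M c sg w)).
- exact: (weq_cat (H _ _) (geq_refl _ _)).
- exact: (weq_cat (geq_refl _ [:: (c x.1, sg x.2)]) IH).
Qed.

Lemma cww I J (c1 : I -> A) (c2 : J -> A) sg1 sg2 :
  (forall i j s t, weq [:: (c1 i, s); (c2 j, t)] [:: (c2 j, t); (c1 i, s)]) ->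
  forall u v, weq (M c1 sg1 u ++ M c2 sg2 v) (M c2 sg2 v ++ M c1 sg1 u).
Proof.
move=> H; elim=> [|x u IH] v; first by rewrite cats0; exact: geq_refl.
rewrite /M /= -/(M c1 sg1 u) -/(M c2 sg2 v).
apply: (geq_trans (v := [:: (c1 x.1, sg1 x.2)] ++ M c2 sg2 v ++ M c1 sg1 u)).
- exact: (weq_cat (geq_refl _ [:: (c1 x.1, sg1 x.2)]) (IH v)).
- rewrite catA -cat_rcons -cats1. apply: weq_cat; last exact: geq_refl.
  exact: clw.
Qed.

Lemma ev_split I (c1 c2 : I -> A) (b2 : bool) :
  (forall i j s t, weq [:: (c1 i, s); (c2 j, t)] [:: (c2 j, t); (c1 i, s)]) ->
  forall w, weq (ev (fun i => [:: (c1 i, false); (c2 i, b2)]) w)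
                (M c1 id w ++ M c2 (fun b => b (+) b2) w).
Proof.
move=> H; elim=> [|[i s] w IH]; first exact: geq_refl.
rewrite ev_cons /M /= -/(M c1 id w) -/(M c2 (fun b => b (+) b2) w).
set M1 := M c1 id w; set M2 := M c2 _ w.
have Hc2 : forall t, weq ((c2 i, t) :: M1) (M1 ++ [:: (c2 i, t)]).
  move=> t. apply: clw => j t'. apply: geq_sym. exact: H.
case: s => /=.
- rewrite /inv_word /=.
  apply: (geq_trans (v := [:: (c2 i, ~~ b2); (c1 i, true)] ++ M1 ++ M2)).
  + exact: (weq_cat (geq_refl _ [:: (c2 i, ~~ b2); (c1 i, true)]) IH).
  apply: (geq_trans (v := [:: (c1 i, true); (c2 i, ~~ b2)] ++ M1 ++ M2)).
  + apply: weq_cat; [apply: geq_sym; exact: H | exact: geq_refl].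
  have K : weq ((c2 i, ~~ b2) :: M1 ++ M2) (M1 ++ (c2 i, ~~ b2) :: M2).
    have := weq_cat (Hc2 (~~ b2)) (geq_refl _ M2). by rewrite -catA.
  exact: (weq_cat (geq_refl _ [:: (c1 i, true)]) K).
- apply: (geq_trans (v := [:: (c1 i, false); (c2 i, b2)] ++ M1 ++ M2)).
  + exact: (weq_cat (geq_refl _ [:: (c1 i, false); (c2 i, b2)]) IH).
  have K : weq ((c2 i, b2) :: M1 ++ M2) (M1 ++ (c2 i, b2) :: M2).
    have := weq_cat (Hc2 b2) (geq_refl _ M2). by rewrite -catA.
  exact: (weq_cat (geq_refl _ [:: (c1 i, false)]) K).
Qed.

End W.

Lemma weq_hom A B (rA : word A -> Prop) (rB : word B -> Prop) (phi : A -> word B) :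
  (forall r, rA r -> weq rB (ev phi r) [::]) ->
  forall u v, weq rA u v -> weq rB (ev phi u) (ev phi v).
Proof.
move=> Hr u v.
elim=> {u v} [w|u v _ IH|u v w _ IH1 _ IH2|u v a b|u v r Hrr].
- exact: geq_refl.
- exact: geq_sym.
- exact: geq_trans IH1 IH2.
- rewrite !ev_cat !ev_cons /=.
  have Hm : weq rB ((if b then inv_word (phi a) else phi a) ++
                    (if ~~ b then inv_word (phi a) else phi a)) [::].
    case: b; [exact: weq_linv | exact: weq_rinv].
  have := weq_ctx (ev phi u) (ev phi v) Hm. by rewrite -catA.
- rewrite !ev_cat. have := weq_ctx (ev phi u) (ev phi v) (Hr r Hrr). by [].
Qed.
Section G.
Variables (T : finType) (relH : seq (word T)) (p : nat) (d : 'I_p -> T).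

Definition psi (g : gen1 T p) : word T :=
  match g with gz i => [:: (d i, false)] | _ => [::] end.

Lemma ev_liftH B (phi : gen1 T p -> word B) h :
  ev phi (liftH p h) = ev (fun t => phi (gT p t)) h.
Proof. exact: (ev_M (gT p) phi h). Qed.

Lemma psi_rels r : rels1 relH d r -> weq (relsH relH) (ev psi r) [::].
Proof.
move=> [[r0 _ ->]|[[i [j ->]]|[[i [j ->]]|[[i [j ->]]|[[i ->]|[c ->]]]]]].
- rewrite ev_liftH ev_nilf. exact: geq_refl.
- exact: geq_refl.
- rewrite /comm !ev_cons /=. exact: (geq_cancel _ [::] [::] (d j) false).
- rewrite /comm !ev_cons /=. exact: (geq_cancel _ [::] [::] (d j) false).
- exact: geq_refl.
- rewrite /comm !ev_cons /= ev_nil cats0. exact: weq_rinv.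
Qed.

Lemma psi_hom u v : weq (rels1 relH d) u v -> weq (relsH relH) (ev psi u) (ev psi v).
Proof. apply: weq_hom. exact: psi_rels. Qed.

Lemma psi_eA w : ev psi (ev (@eA T p) w) = ev (eR d) w.
Proof. rewrite ev_comp. by apply: ev_ext. Qed.

Lemma psi_eB w : ev psi (ev (@eB T p) w) = ev (eR d) w.
Proof. rewrite ev_comp. by apply: ev_ext. Qed.

Definition sel (s : S1gen T p) : option 'I_p :=
  match s with sZ i | sA i | sB i => Some i | _ => None end.

Definition selw (v : word (S1gen T p)) : word 'I_p :=
  pmap (fun x => omap (fun i => (i, x.2)) (sel x.1)) v.

Lemma psi_eS1 v : ev psi (ev (@eS1 T p) v) = ev (eR d) (selw v).
Proof.
rewrite ev_comp. elim: v => [|[s b] v IH] //.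
rewrite ev_cons IH. by case: s => [t|i|i|i|i|i|] /=; rewrite ?ev_cons //=; case: b.
Qed.

Lemma size_selw v : (size (selw v) <= size v)%N.
Proof. by rewrite /selw size_pmap count_size. Qed.

Definition phiT (t : T) : word (gen1 T p) := [:: (gT p t, false)].

Lemma phiT_hom u v : weq (relsH relH) u v -> weq (rels1 relH d) (ev phiT u) (ev phiT v).
Proof.
apply: weq_hom => r Hr. rewrite ev_single.
have Hr1 : rels1 relH d (liftH p r) by left; exists r.
have := geq_rel [::] [::] Hr1. by rewrite /= cats0.
Qed.

Lemma evS1_T u : ev (@eS1 T p) (M (@sT T p) id u) = liftH p u.
Proof. rewrite ev_M. exact: ev_single. Qed.

Lemma path_eq (w : word 'I_p) (wT : word T) : rev w = w ->
  weq (relsH relH) (ev (@eT T) wT) (ev (eR d) w) ->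
  weq (rels1 relH d) (ev (@eA T p) w ++ liftH p (inv_word wT)) (ev (@eB T p) w).
Proof.
move=> Hrev HwT.
have cxy : forall i j s t, weq (rels1 relH d) [:: (gx T i, s); (gy T j, t)] [:: (gy T j, t); (gx T i, s)].
  move=> i j. apply: comm_letters. right; left; by exists i, j.
have cxz : forall i j s t, weq (rels1 relH d) [:: (gx T i, s); (gz T j, t)] [:: (gz T j, t); (gx T i, s)].
  move=> i j. apply: comm_letters. right; right; left; by exists i, j.
have cyz : forall i j s t, weq (rels1 relH d) [:: (gy T i, s); (gz T j, t)] [:: (gz T j, t); (gy T i, s)].
  move=> i j. apply: comm_letters. right; right; right; left; by exists i, j.
have EA := ev_split false cxz w.
have EB := ev_split false cyz w.
have ED := ev_split true cxy w.
set MX := M (@gx T p) id w. set MZ := M (@gz T p) (addb^~ false) w.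
set Yb := M (@gy T p) (addb^~ true) w.
have E1 : weq (rels1 relH d) (liftH p wT) (ev (fun i => [:: (gT p (d i), false)]) w).
  have := phiT_hom HwT. rewrite ev_comp (ev_comp _ phiT).
  have -> : ev (fun i => ev phiT (eT i)) wT = liftH p wT.
    by rewrite (ev_ext _ (e' := phiT)) // ev_single.
  by [].
have Ed : forall i, weq (rels1 relH d) [:: (gT p (d i), false)] [:: (gx T i, false); (gy T i, true)].
  move=> i.
  have Hr : rels1 relH d [:: (gT p (d i), false); (gy T i, false); (gx T i, true)].
    right; right; right; right; left; by exists i.
  apply: geq_sym.
  apply: (geq_trans (v := [:: (gT p (d i), false); (gy T i, false); (gx T i, true)] ++ [:: (gx T i, false); (gy T i, true)])).
  - apply: geq_sym. exact: (geq_rel [::] _ Hr).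
  apply: (geq_trans (v := [:: (gT p (d i), false); (gy T i, false); (gy T i, true)])).
  - exact: (geq_cancel _ [:: (gT p (d i), false); (gy T i, false)] [:: (gy T i, true)] (gx T i) true).
  have := geq_cancel (rels1 relH d) [:: (gT p (d i), false)] [::] (gy T i) false.
  by rewrite cats0.
have E2 : weq (rels1 relH d) (liftH p (inv_word wT)) (inv_word (MX ++ Yb)).
  have -> : liftH p (inv_word wT) = inv_word (liftH p wT).
    by rewrite /liftH /inv_word map_rev -!map_comp.
  apply: weq_inv. apply: geq_trans E1 _. apply: geq_trans _ ED.
  exact: weq_ev_pt.
have HY : inv_word Yb = M (@gy T p) id w.
  rewrite /Yb inv_M Hrev /M. apply: eq_map => -[i b] /=. by case: b.
rewrite inv_cat HY in E2.
set MY := M (@gy T p) id w in E2.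
have EB' : weq (rels1 relH d) (MY ++ MZ) (ev (@eB T p) w).
  apply: geq_sym. apply: geq_trans EB _. exact: geq_refl.
apply: geq_trans EB'.
apply: (geq_trans (v := (MX ++ MZ) ++ (MY ++ inv_word MX))).
- exact: weq_cat.
apply: (geq_trans (v := (MZ ++ MY) ++ MX ++ inv_word MX)).
- rewrite -!catA. rewrite !catA -(catA MX). apply: weq_cat; last exact: geq_refl.
  apply: (geq_trans (v := MZ ++ MX ++ MY)).
  + rewrite !catA. apply: weq_cat; last exact: geq_refl. exact: cww.
  rewrite -catA. apply: weq_cat; first exact: geq_refl. exact: cww.
have := weq_cat (geq_refl (rels1 relH d) (MZ ++ MY)) (weq_rinv _ MX).
rewrite cats0 => H. apply: geq_trans H _. apply: cww => i j s t; apply: geq_sym; exact: cyz.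
Qed.


Definition cj (u : word (gen2 T p)) : word (gen2 T p) := (gs2, true) :: u ++ [:: (gs2, false)].

Lemma cj_cat u v : weq (rels2 relH d) (cj (u ++ v)) (cj u ++ cj v).
Proof.
apply: geq_sym.
have := geq_cancel (rels2 relH d) ((gs2, true) :: u) (v ++ [:: (gs2, false)]) gs2 false.
by rewrite /cj /= -!catA /=.
Qed.

Lemma cj_inv u : cj (inv_word u) = inv_word (cj u).
Proof. by rewrite /cj inv_cons inv_cat -catA. Qed.

Lemma lift1_cat (u v : word (gen1 T p)) : lift1 (u ++ v) = lift1 u ++ lift1 v.
Proof. exact: map_cat. Qed.

Lemma lift1_inv (u : word (gen1 T p)) : lift1 (inv_word u) = inv_word (lift1 u).
Proof. by rewrite /lift1 /inv_word map_rev -!map_comp. Qed.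

Lemma conj_letter i : weq (rels2 relH d) (cj (lift1 (eA T i))) (lift1 (eB T i)).
Proof.
set a := lift1 (eA T i); set b := lift1 (eB T i).
have HQ : rels2 relH d ((gs2, true) :: a ++ (gs2, false) :: inv_word b).
  right; by exists i.
apply: (geq_trans (v := cj a ++ inv_word b ++ b)).
- have := weq_cat (geq_refl (rels2 relH d) (cj a)) (weq_linv _ b).
  rewrite cats0 => H. exact: geq_sym.
have := geq_rel [::] b HQ. by rewrite /cj /=.
Qed.

Lemma conj_eq w : weq (rels2 relH d) (cj (lift1 (ev (@eA T p) w))) (lift1 (ev (@eB T p) w)).
Proof.
elim: w => [|[i b] w IH].
- rewrite /cj /=. exact: (geq_cancel _ [::] [::] gs2 true).
rewrite !ev_cons !lift1_cat. apply: geq_trans (cj_cat _ _) _.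
apply: weq_cat => //. case: b; last exact: conj_letter.
change (weq (rels2 relH d) (cj (lift1 (inv_word (eA T i)))) (lift1 (inv_word (eB T i)))).
rewrite !lift1_inv cj_inv. apply: weq_inv. exact: conj_letter.

Qed.
End G.
Unset Implicit Arguments.
Set Strict Implicit.
Set Warnings "-notation-overridden".
Open Scope R_scope.

Theorem lemma3p8
  (T : finType) (relH : seq (word T)) (p : nat) (d : 'I_p -> T)
  (* R = {d_1,...,d_p} is a subset of T *)
  (Hd_inj : injective d)
  (* F = <R> is free with free basis R in H *)
  (Hfree : forall u v : word 'I_p,
      weq (relsH relH) (ev (eR d) u) (ev (eR d) v) -> weq (@no_rels 'I_p) u v)
  (Delta f : R -> R) (D r0 : R)
  (* Delta is a non-decreasing bijection of [0, oo) *)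
  (HDmono : forall x y, 0 <= x -> x <= y -> Delta x <= Delta y)
  (HDpos : forall x, 0 <= x -> 0 <= Delta x)
  (HDinj : forall x y, 0 <= x -> 0 <= y -> Delta x = Delta y -> x = y)
  (HDsurj : forall y, 0 <= y -> exists x, 0 <= x /\ Delta x = y)
  (* Delta is Lipschitz equivalent to Dist_F^H *)
  (HDequiv : exists C : nat, (1 <= C)%N /\
      (forall n m : nat, dist_is relH d (C * n) m -> Delta (INR n) <= INR C * INR m) /\
      (forall n m : nat, dist_is relH d n m -> INR m <= INR C * Delta (INR (C * n))))
  (* Delta(r) >= r for r >= 1 *)
  (HDge : forall x, 1 <= x -> x <= Delta x)
  (* f = Delta^{-1} *)
  (Hfinv : forall x, 0 <= x -> 0 <= f x /\ Delta (f x) = x)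
  (* f(|g|_R) <= |g|_T for g in F *)
  (Hflen : forall (w : word 'I_p) (n m : nat),
      is_wlen (relsH relH) (eR d) (ev (eR d) w) n ->
      is_wlen (relsH relH) (@eT T) (ev (eR d) w) m -> f (INR n) <= INR m)
  (HD : 1 < D) (Hr0 : 1 <= r0)
  (* palindromic certificates *)
  (Hpal : forall r : R, r0 <= r ->
      exists w : word 'I_p, reduced w /\ rev w = w /\
        (exists n : nat, is_wlen (relsH relH) (eR d) (ev (eR d) w) n /\
                         r / D <= INR n <= r) /\
        (exists m : nat, is_wlen (relsH relH) (@eT T) (ev (eR d) w) m /\
                         INR m <= D * f r))
  (r : nat) (Hr : r0 <= INR r) :
  exists g0 g1 : word (gen1 T p),
    (* (1) s_2^{-1} g_0 s_2 = g_1 in G_2 *)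
    weq (rels2 relH d) ((gs2, true) :: lift1 g0 ++ [:: (gs2, false)]) (lift1 g1) /\
    (* (2) g_0 in F_xz, g_1 in F_yz, with length bounds *)
    (exists n : nat, is_wlen (rels1 relH d) (@eA T p) g0 n /\ INR r / D <= INR n <= INR r) /\
    (exists n : nat, is_wlen (rels1 relH d) (@eB T p) g1 n /\ INR r / D <= INR n <= INR r) /\
    (* (3) a path in Cayley(G_1, S_1) from g_0 to g_1 *)
    (exists w : word (S1gen T p),
       INR (size w) <= D * f (INR r) /\
       weq (rels1 relH d) (g0 ++ ev (@eS1 T p) w) g1 /\
       forall k : nat, (k <= size w)%N ->
         (* k-th vertex is g_0 h with h in H *)
         (exists h : word T,
            weq (rels1 relH d) (g0 ++ ev (@eS1 T p) (take k w)) (g0 ++ liftH p h)) /\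
         (* k-th vertex lies outside the open ball of radius r/D about e *)
         (forall v : word (S1gen T p),
            weq (rels1 relH d) (ev (@eS1 T p) v) (g0 ++ ev (@eS1 T p) (take k w)) ->
            INR r / D <= INR (size v))).
Proof.
have [w [Hred [Hrev [[n [Hn Hnb]] [m [Hm Hmb]]]]]] := Hpal (INR r) Hr.
case: Hn => [[w' [Hw'sz Hw'eq]] Hnmin].
case: Hm => [[wT [HwTsz HwTeq]] _].
exists (ev (@eA T p) w), (ev (@eB T p) w).
split; first exact: conj_eq.
have Hfw : weq (@no_rels 'I_p) w' w by apply: Hfree.
split.
  exists n; split => //; split.
  - exists w'; split => //. apply: weq_hom Hfw. by move=> ? [].
  - move=> v Hv. apply: Hnmin. by have := psi_hom Hv; rewrite !psi_eA.
split.
  exists n; split => //; split.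
  - exists w'; split => //. apply: weq_hom Hfw. by move=> ? [].
  - move=> v Hv. apply: Hnmin. by have := psi_hom Hv; rewrite !psi_eB.
exists (M (@sT T p) id (inv_word wT)).
split.
  by rewrite /M size_map /inv_word size_rev size_map HwTsz.
split.
  rewrite evS1_T. exact: path_eq.
move=> k _.
have -> : take k (M (@sT T p) id (inv_word wT)) = M (@sT T p) id (take k (inv_word wT)).
  by rewrite /M map_take.
rewrite evS1_T. split.
  exists (take k (inv_word wT)). exact: geq_refl.
move=> v Hv.
have := psi_hom Hv. rewrite psi_eS1 ev_cat psi_eA ev_liftH ev_nilf cats0 => H.
have Hle := Hnmin _ H.
have Hle2 := leq_trans Hle (size_selw v).
apply: Rle_trans (proj1 Hnb) _. apply: le_INR. exact/leP.
Qed.
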